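(* Let $2\le d\leq n+1$ and $0<t<t_{n,d}=\frac{d}{n+1}$. Then every point of $Z_1\cup Z_2$ is GIT$_t$-unstable. In particular, $\big((H_{n,d}\times H_{n,1})\setminus(Z_1\cup Z_2)\big)^{ss}_t=(H_{n,d}\times H_{n,1})^{ss}_t$.
   Context: $H_{n,d}=\mathbb P(H^0(\mathbb P^{n+1},\mathcal O(d)))$, $H_{n,1}$ the space of hyperplanes of $\mathbb P^{n+1}$; $G=\mathrm{SL}(n+2,\mathbb C)$ acts naturally on $H_{n,d}\times H_{n,1}$. For $a,b>0$ let $\mathcal O(a,b)=\pi_1^*\mathcal O_{H_{n,d}}(a)\otimes\pi_2^*\mathcal O_{H_{n,1}}(b)$ with its natural $G$-linearisation; for rational $t=b/a>0$, GIT$_t$-(semi)stability means GIT (semi)stability with respect to $\mathcal O(a,b)$, and $(\cdot)^{ss}_t$ denotes the GIT$_t$-semistable locus. $Z_1$ is the locus of $(p,l)$ with $\mathrm{Supp}\{l=0\}\subseteq\mathrm{Supp}\{p=0\}$; $Z_2$ is the locus of $(p,l)$ such that, with $X=\{p=0\}$, $H=\{l=0\}$, there is a hyperplane $H'\ne H$ with $X\cap H=X\cap H'$. *)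

(* Defs.v *)
From HB Require Import structures.
From mathcomp Require Import all_boot all_order all_algebra.
From mathcomp Require Import reals.
From mathcomp Require Import complex.
From mathcomp Require Import mpoly.

Set Implicit Arguments.
Unset Strict Implicit.
Unset Printing Implicit Defensive.

Import Order.TTheory GRing.Theory Num.Theory.
Local Open Scope ring_scope.

(* The complex numbers: R[i] for R a complete archimedean ordered field
   (R : realType is a model of the reals, so R[i] is a model of C). *)

Section GIT.
Variable (R : realType).
Local Notation C := (R[i]).
Variable (N : nat). (* N = n + 2 homogeneous coordinates on P^{n+1} *)

Local Notation P := {mpoly C[N]}.

(* A representative of a point of H_{n,d} = P(H^0(P^{n+1}, O(d))):
   a nonzero homogeneous polynomial of degree d (defined up to scalars). *)
Definition is_form (d : nat) (p : P) : Prop := p != 0 /\ p \is d.-homog.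

(* Natural (left) action of A in SL(N, C) on forms: (A . p)(x) = p(A^{-1} x). *)
Definition lin_subst (B : 'M[C]_N) : N.-tuple P :=
  [tuple \sum_(j < N) B i j *: 'X_j | i < N].
Definition act (A : 'M[C]_N) (p : P) : P := p \mPo lin_subst (invmx A).

(* Coordinates on H^0(O(d)): coefficients of the monomials of degree d. *)
Definition mons (d : nat) := {m : 'X_{1..N < d.+1} | mdeg (val m) == d}.
Definition coordk (d : nat) (k : 'I_#|{: mons d}|) (p : P) : C :=
  p@_(val (val (enum_val k))).

Definition eval_coords (d : nat)
    (Q : {mpoly C[#|{: mons d}| + #|{: mons 1}|]}) (p l : P) : C :=
  Q.@[fun i => match split i with
               | inl k => coordk k p
               | inr k => coordk k l
               end].

(* Q is bihomogeneous of bidegree (k1, k2) in the two groups of coordinates;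
   such Q are exactly the sections of O(k1, k2) on H_{n,d} x H_{n,1}. *)
Definition bihomog (d k1 k2 : nat)
    (Q : {mpoly C[#|{: mons d}| + #|{: mons 1}|]}) : Prop :=
  forall m, m \in msupp Q ->
    \sum_(i < #|{: mons d}|) m (lshift _ i) = k1 /\
    \sum_(j < #|{: mons 1}|) m (rshift _ j) = k2.

Definition sl_invariant (d : nat)
    (Q : {mpoly C[#|{: mons d}| + #|{: mons 1}|]}) : Prop :=
  forall (A : 'M[C]_N), \det A = 1 ->
  forall p l : P, p \is d.-homog -> l \is 1.-homog ->
    eval_coords Q (act A p) (act A l) = eval_coords Q p l.

(* GIT semistability of (p, l) w.r.t. O(a, b) with its natural
   linearisation: some invariant section of O(ma, mb), m > 0, does not
   vanish at (p, l). *)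
Definition git_semistable (d a b : nat) (p l : P) : Prop :=
  exists (m : nat) (Q : {mpoly C[#|{: mons d}| + #|{: mons 1}|]}),
    (0 < m)%N /\ bihomog (m * a) (m * b) Q /\ sl_invariant Q /\
    eval_coords Q p l != 0.

Definition git_unstable (d a b : nat) (p l : P) : Prop :=
  ~ git_semistable d a b p l.

(* Points of P^{n+1}: nonzero vectors (up to scalars). *)
Definition zero_set_pt (x : 'I_N -> C) (f : P) : Prop := f.@[x] = 0.

Definition Z1 (p l : P) : Prop :=
  forall x : 'I_N -> C, (exists i, x i != 0) -> l.@[x] = 0 -> p.@[x] = 0.

(* Z_2 : there is a hyperplane H' != H with X cap H = X cap H' (as sets). *)
Definition Z2 (p l : P) : Prop :=
  exists l' : P, is_form 1 l' /\ (~ exists c : C, l' = c *: l) /\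
    forall x : 'I_N -> C, (exists i, x i != 0) ->
      ((p.@[x] = 0 /\ l.@[x] = 0) <-> (p.@[x] = 0 /\ l'.@[x] = 0)).

End GIT.

(* Main.v *)
Require Import Defs.
From HB Require Import structures.
From mathcomp Require Import all_boot all_order all_algebra.
From mathcomp Require Import reals complex mpoly.
From mathcomp Require Import zify.
Import Order.TTheory GRing.Theory Num.Theory.
Local Open Scope ring_scope.
Set Implicit Arguments.
Unset Strict Implicit.
Unset Printing Implicit Defensive.

Lemma poly_const_nz (F : numDomainType) (u : {poly F}) c :
  (forall s : F, s != 0 -> u.[s] = c) -> u = c%:P.
Proof.
move=> H; apply/eqP; rewrite -subr_eq0; apply/negPn/negP => nz.
have := @max_poly_roots _ _ [seq i.+1%:R | i <- iota 0 (size (u - c%:P))] nz.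
rewrite size_map size_iota ltnn => h; suff: false by []; apply: h.
- apply/allP => x /mapP [i _ ->]; rewrite /root !hornerE H ?subrr //.
  by rewrite pnatr_eq0.
- rewrite map_inj_uniq ?iota_uniq // => i j /eqP; rewrite eqr_nat.
  by move/eqP => [].
Qed.

Lemma digits_inj (B k : nat) (m1 m2 : 'I_k -> nat) :
  (forall i, m1 i < B)%N -> (forall i, m2 i < B)%N ->
  (\sum_(i < k) m1 i * B ^ i = \sum_(i < k) m2 i * B ^ i)%N ->
  forall i, m1 i = m2 i.
Proof.
elim: k m1 m2 => [|k IH] m1 m2 h1 h2 E i; first by case: i.
move: E; rewrite !big_ord_recl !expn0 !muln1.
have eS : forall m : 'I_k.+1 -> nat,
  (\sum_(i < k) m (lift ord0 i) * B ^ (bump 0 i) =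
   B * \sum_(i < k) m (lift ord0 i) * B ^ i)%N.
  by move=> m; rewrite big_distrr; apply: eq_bigr => j _;
     rewrite /bump /= add1n expnS mulnCA.
rewrite !eS => E.
have B0 : (0 < B)%N by apply: leq_ltn_trans (h1 ord0).
have e0 : m1 ord0 = m2 ord0.
  have := congr1 (fun x => x %% B)%N E.
  have md : forall x y, ((x + B * y) %% B = x %% B)%N.
    by move=> x y; rewrite addnC mulnC modnMDl.
  by rewrite !md !modn_small.
move: E; rewrite e0 => /addnI /eqP; rewrite eqn_pmul2l // => /eqP E.
have IH' := IH (fun j => m1 (lift ord0 j)) (fun j => m2 (lift ord0 j))
  (fun j => h1 _) (fun j => h2 _) E.
case: i => [[|i] Hi].
  by rewrite (_ : Ordinal Hi = ord0) //; apply: val_inj.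
have Hi' : (i < k)%N by [].
by rewrite (_ : Ordinal Hi = lift ord0 (Ordinal Hi')) ?IH' //; apply: val_inj.
Qed.

Lemma mpoly_vanish (F : numDomainType) (k : nat) (q : {mpoly F[k]}) :
  (forall x, q.@[x] = 0) -> q = 0.
Proof.
move=> H; apply/eqP/negPn/negP => nz.
set B := msize q.
pose phi (m : 'X_{1..k}) := (\sum_(i < k) m i * B ^ i)%N.
pose U := \sum_(m <- msupp q) q@_m *: 'X^(phi m).
have HU : forall t, U.[t] = q.@[fun i => t ^+ (B ^ i)].
  move=> t; rewrite mevalE /U horner_sum; apply: eq_bigr => m _.
  rewrite hornerZ hornerXn; congr (_ * _).
  rewrite /phi (eq_bigr (fun i => t ^+ (m i * B ^ i)%N)); first by rewrite prodrXr.
  by move=> i _; rewrite -exprM mulnC.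
have U0 : U = 0.
  by apply: (@poly_const_nz _ U 0) => s _; rewrite HU H.
have [m0 m0in] : exists m0, m0 \in msupp q.
  case E: (msupp q) => [|m0 s]; last by exists m0; rewrite inE eqxx.
  by move: nz; rewrite -msupp_eq0 E.
have : U`_(phi m0) = q@_m0.
  rewrite /U coef_sumMXn big_mkcond (bigD1_seq m0) ?msupp_uniq //= eqxx /=.
  rewrite big1_seq ?addr0 // => m /andP [nm mi]; case: ifP => // /eqP ep.
  have lt : forall m' : 'X_{1..k}, m' \in msupp q -> forall j, (m' j < B)%N.
    move=> m' m'in j; apply: leq_ltn_trans (msize_mdeg_lt m'in).
    by rewrite mdegE (bigD1 j) //= leq_addr.
  exfalso; move/negP: nm; apply; apply/eqP/mnmP => i.
  exact: (@digits_inj B k (fun j => m j) (fun j => m0 j) (lt _ mi) (lt _ m0in) ep).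
move=> e; have := m0in; by rewrite mcoeff_msupp -e U0 coef0 eqxx.
Qed.

Section S.
Variable R : realType.
Local Notation C := (R[i]).
Variable N : nat.
Local Notation P := {mpoly C[N]}.

Lemma tnth_lin (B : 'M[C]_N) i : tnth (lin_subst B) i = \sum_(j < N) B i j *: 'X_j.
Proof. by rewrite /lin_subst tnth_mktuple. Qed.

Lemma meval_lin (B : 'M[C]_N) i (x : 'I_N -> C) :
  (tnth (lin_subst B) i).@[x] = \sum_(j < N) B i j * x j.
Proof.
rewrite tnth_lin raddf_sum; apply: eq_bigr => j _ /=.
by rewrite mevalZ mevalXU.
Qed.

Lemma comp_lin (p : P) (B : 'M[C]_N) (x : 'I_N -> C) :
  (p \mPo lin_subst B).@[x] = p.@[fun i => \sum_(j < N) B i j * x j].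
Proof. by rewrite comp_mpoly_meval; apply: meval_eq => i; rewrite meval_lin. Qed.

Lemma comp_mpolyA k1 k2 (p : P) (t : N.-tuple {mpoly C[k1]})
    (u : k1.-tuple {mpoly C[k2]}) :
  (p \mPo t) \mPo u = p \mPo [tuple (tnth t i) \mPo u | i < N].
Proof.
rewrite [p \mPo t]comp_mpolyEX [RHS]comp_mpolyEX raddf_sum; apply: eq_bigr => m _ /=.
rewrite comp_mpolyZ !comp_mpolyX rmorph_prod; congr (_ *: _).
by apply: eq_bigr => i _; rewrite rmorphXn tnth_mktuple.
Qed.

Lemma lin_substM (A B : 'M[C]_N) :
  lin_subst (A *m B) = [tuple (tnth (lin_subst A) i) \mPo lin_subst B | i < N].
Proof.
apply: eq_from_tnth => i; rewrite tnth_mktuple !tnth_lin raddf_sum.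
under [RHS]eq_bigr => j _ do rewrite /= comp_mpolyZ comp_mpolyXU -tnth_nth tnth_lin.
under [RHS]eq_bigr => j _ do rewrite scaler_sumr.
rewrite exchange_big /=; apply: eq_bigr => k _.
by rewrite mxE scaler_suml; apply: eq_bigr => j _; rewrite scalerA.
Qed.

Lemma lin_subst_diag (w : 'rV[C]_N) :
  lin_subst (diag_mx w) = [tuple w 0 i *: 'X_i | i < N].
Proof.
apply: eq_from_tnth => i; rewrite tnth_lin tnth_mktuple (bigD1 i) //= big1.
  by rewrite addr0 mxE eqxx mulr1n.
by move=> j nj; rewrite mxE eq_sym (negPf nj) mulr0n scale0r.
Qed.

Lemma coef_comp_diag (p : P) (w : 'rV[C]_N) e :
  (p \mPo lin_subst (diag_mx w))@_e = p@_e * \prod_(i < N) w 0 i ^+ e i.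
Proof.
rewrite lin_subst_diag comp_mpolyEX.
have E : forall m : 'X_{1..N},
  'X_[m] \mPo [tuple w 0 i *: 'X_i | i < N] =
  (\prod_(i < N) w 0 i ^+ m i) *: 'X_[m].
  move=> m; rewrite comp_mpolyX mpolyXE_id -scaler_prod.
  by apply: eq_bigr => i _; rewrite tnth_mktuple exprZn.
under eq_bigr => m _ do rewrite E.
rewrite raddf_sum /=.
case: (boolP (e \in msupp p)) => ein.
  rewrite (bigD1_seq e) ?msupp_uniq //= [X in _ + X]big1 ?addr0.
    by rewrite mcoeffZ mcoeffZ mcoeffX eqxx mulr1.
  by move=> m nm; rewrite !mcoeffZ mcoeffX (negPf nm) !mulr0.
rewrite memN_msupp_eq0 // mul0r big1_seq // => m /andP [_ mi].
rewrite !mcoeffZ mcoeffX; case: eqP => [em|]; last by rewrite !mulr0.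
by move: ein; rewrite -em mi.
Qed.

End S.

Lemma prod_exprz (F : fieldType) (I : finType) (s : F) (f : I -> int) (g : I -> nat) :
  s != 0 -> \prod_i (s ^ f i) ^+ g i = s ^ (\sum_i f i * (g i)%:Z).
Proof.
move=> s0; apply: (big_rec2 (fun y1 y2 => y1 = s ^ y2)) => [|i y1 y2 _ ->].
  by rewrite expr0z.
by rewrite exprnP exprz_exp expfzDr.
Qed.

Section S.
Variable R : realType.
Local Notation C := (R[i]).
Variable N : nat.
Local Notation P := {mpoly C[N]}.

Definition wt (r : 'I_N -> int) (e : 'X_{1..N}) : int := \sum_i r i * (e i)%:Z.

Lemma coordk_diag d (k : 'I_#|{: mons N d}|) (p : P) (r : 'I_N -> int) (s : C) : s != 0 ->
  coordk k (p \mPo lin_subst (diag_mx (\row_i s ^ r i))) =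
  coordk k p * s ^ wt r (val (val (enum_val k))).
Proof.
move=> s0; rewrite /coordk coef_comp_diag; congr (_ * _).
rewrite -prod_exprz //; apply: eq_bigr => i _; by rewrite mxE.
Qed.

Lemma HM d (K1 := #|{: mons N d}|) (K2 := #|{: mons N 1}|)
   (Q : {mpoly C[K1 + K2]}) A1 A2 (p0 l0 : P) (r : 'I_N -> int) (al be : int) c :
  bihomog A1 A2 Q ->
  (forall e, e \in msupp p0 -> al <= wt r e) ->
  (forall e, e \in msupp l0 -> be <= wt r e) ->
  0 < A1%:Z * al + A2%:Z * be ->
  (forall s : C, s != 0 -> eval_coords Q (p0 \mPo lin_subst (diag_mx (\row_i s ^ r i)))
                    (l0 \mPo lin_subst (diag_mx (\row_i s ^ r i))) = c) ->
  c = 0.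
Proof.
move=> hQ hp hl hpos hinv.
pose v (i : 'I_(K1 + K2)) : C := match split i with
  | inl k => coordk k p0 | inr k => coordk k l0 end.
pose rho (i : 'I_(K1 + K2)) : int := match split i with
  | inl k => wt r (val (val (enum_val k))) | inr k => wt r (val (val (enum_val k))) end.
pose V (mu : 'X_{1..K1 + K2}) := \prod_i v i ^+ mu i.
pose E (mu : 'X_{1..K1 + K2}) := \sum_i rho i * (mu i)%:Z.
have Phi : forall s : C, s != 0 ->
   c = \sum_(mu <- msupp Q) Q@_mu * V mu * s ^ E mu.
  move=> s s0; rewrite -(hinv s s0) /eval_coords mevalE; apply: eq_bigr => mu _.
  rewrite -mulrA; congr (_ * _).
  rewrite /V /E -prod_exprz // -big_split /=; apply: eq_bigr => i _.
  rewrite -exprMn; congr (_ ^+ _).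
  by rewrite /v /rho; case: (split i) => k; rewrite coordk_diag.
have Epos : forall mu, mu \in msupp Q -> V mu != 0 -> 0 < E mu.
  move=> mu muin Vnz; apply: (lt_le_trans hpos).
  have [h1 h2] := hQ mu muin.
  have vnz : forall i, (0 < mu i)%N -> v i != 0.
    move=> i mui; apply/negP => /eqP vi; move/negP: Vnz; apply.
    rewrite /V (bigD1 i) //= vi expr0n.
    by rewrite eqn0Ngt mui mul0r.
  have sZ : forall (I : finType) (F : I -> nat), ((\sum_i F i)%N)%:Z = \sum_i (F i)%:Z.
    by move=> I F; rewrite -[LHS]intz sumMz; apply: eq_bigr => *; rewrite intz.
  rewrite /E big_split_ord /=; apply: lerD.
    rewrite -h1 sZ mulr_suml; apply: ler_sum => k _.
    have -> : rho (lshift K2 k) = wt r (val (val (enum_val k))).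
      by rewrite /rho (unsplitK (inl k)).
    rewrite [X in _ <= X]mulrC; case: (posnP (mu (lshift K2 k))) => [->|mp].
      by rewrite !mul0r.
    apply: ler_wpM2l => //; apply: hp.
    rewrite mcoeff_msupp; have := vnz _ mp.
    by rewrite /v (unsplitK (inl k)).
  rewrite -h2 sZ mulr_suml; apply: ler_sum => k _.
  have -> : rho (rshift K1 k) = wt r (val (val (enum_val k))).
    by rewrite /rho (unsplitK (inr k)).
  rewrite [X in _ <= X]mulrC; case: (posnP (mu (rshift K1 k))) => [->|mp].
    by rewrite !mul0r.
  apply: ler_wpM2l => //; apply: hl.
  rewrite mcoeff_msupp; have := vnz _ mp.
  by rewrite /v (unsplitK (inr k)).
pose U := \sum_(mu <- msupp Q) (Q@_mu * V mu) *: 'X^(`|E mu|%N).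
have HU : U = c%:P.
  apply: poly_const_nz => s s0; rewrite (Phi s s0) /U horner_sum.
  apply: eq_big_seq => mu muin; rewrite hornerZ hornerXn.
  case: (eqVneq (V mu) 0) => [->|Vnz]; first by rewrite !mulr0 !mul0r.
  congr (_ * _); rewrite exprnP abszE gtr0_norm //; exact: Epos.
have U0 : U`_0 = 0.
  rewrite /U coef_sumMXn big1_seq // => mu /andP [/andP [_ e0] muin].
  case: (eqVneq (V mu) 0) => [->|Vnz]; first by rewrite mulr0.
  have := Epos mu muin Vnz; move: e0; rewrite absz_eq0 => /eqP ->.
  by rewrite ltxx.
by move: U0; rewrite HU coefC.
Qed.

End S.

Section S.
Variable R : realType.
Local Notation C := (R[i]).
Variable N : nat.
Local Notation P := {mpoly C[N]}.

Definition lf (a : 'rV[C]_N) : P := \sum_i a 0 i *: 'X_i.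

Lemma lf_coef a m : (lf a)@_m = \sum_i a 0 i * (U_(i)%MM == m)%:R.
Proof. by rewrite /lf raddf_sum; apply: eq_bigr => i _ /=; rewrite mcoeffZ mcoeffX. Qed.

Lemma lin1 (p : P) : p \is 1.-homog -> p = lf (\row_i p@_U_(i)).
Proof.
move=> hp; apply/mpolyP => m; rewrite lf_coef.
case: (boolP (mdeg m == 1%N)) => [/mdeg1P [i /eqP ->]|nm].
  rewrite (bigD1 i) //= eq_mnm1 eqxx mulr1 mxE big1 ?addr0 // => i' ni.
  by rewrite eq_mnm1 (negPf ni) mulr0.
rewrite (dhomog_nemf_coeff hp nm) big1 // => i _.
case: eqP => [e|]; last by rewrite mulr0.
by move: nm; rewrite -e mdeg1 eqxx.
Qed.

Lemma lf_comp (a : 'rV[C]_N) (M : 'M[C]_N) :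
  lf a \mPo lin_subst M = lf (a *m M).
Proof.
rewrite /lf raddf_sum /=.
under eq_bigr => i _ do rewrite comp_mpolyZ comp_mpolyXU -tnth_nth tnth_lin scaler_sumr.
rewrite exchange_big /=; apply: eq_bigr => j _.
by rewrite mxE scaler_suml; apply: eq_bigr => i _; rewrite scalerA.
Qed.

Lemma lf_eval (a : 'rV[C]_N) x : (lf a).@[x] = \sum_i a 0 i * x i.
Proof. by rewrite /lf raddf_sum; apply: eq_bigr => i _ /=; rewrite mevalZ mevalXU. Qed.

Lemma lf_delta (g : C) j : lf (\row_i (if i == j then g else 0)) = g *: 'X_j.
Proof.
rewrite /lf (bigD1 j) //= mxE eqxx big1 ?addr0 // => i ni.
by rewrite mxE (negPf ni) scale0r.
Qed.

Lemma msupp_X (g : C) j e : e \in msupp (g *: 'X_j : P) -> e = U_(j)%MM.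
Proof.
rewrite mcoeff_msupp mcoeffZ mcoeffX; case: (eqVneq U_(j)%MM e) => [<-|ne] //.
by rewrite mulr0 eqxx.
Qed.

Definition T (j : 'I_N) (u : 'I_N -> C) : 'M[C]_N :=
  1%:M + \matrix_(i, i') ((i == j)%:R * u i').

Lemma rowT (a : 'rV[C]_N) j u i : (a *m T j u) 0 i = a 0 i + a 0 j * u i.
Proof.
rewrite mulmxDr mulmx1 mxE; congr (_ + _); rewrite mxE (bigD1 j) //= mxE eqxx mul1r.
rewrite big1 ?addr0 // => k nk; by rewrite mxE (negPf nk) mul0r mulr0.
Qed.

Lemma T_unit j u : u j = 0 -> T j u \in unitmx.
Proof.
move=> uj; suff: T j u *m T j (fun i => - u i) = 1%:M by case/mulmx1_unit.
apply/row_matrixP => i; rewrite row_mul; apply/rowP => i'.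
rewrite rowT !mxE uj mulr0 addr0.
case: (eqVneq i j) => [->|nij]; first by rewrite !mul1r addrK.
by rewrite mul0r addr0 mul0r addr0.
Qed.

Lemma comp_homog d (p : P) (M : 'M[C]_N) :
  p \is d.-homog -> p \mPo lin_subst M \is d.-homog.
Proof.
move=> hp; rewrite comp_mpolyEX big_seq; apply: rpred_sum => m min.
apply: rpredZ; rewrite comp_mpolyX.
have -> : d = (\sum_(i < N) 1 * m i)%N.
  have := dhomog_mf hp min; rewrite /= => <-.
  by rewrite mdegE; apply: eq_bigr => i _; rewrite mul1n.
have gen : forall s : seq 'I_N,
  \prod_(i <- s) tnth (lin_subst M) i ^+ m i \is (\sum_(i <- s) 1 * m i)%N.-homog.
  elim => [|i s IH]; first by rewrite !big_nil; exact: dhomog1.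
  rewrite !big_cons; apply: dhomogM => //; apply: dhomogMn.
  rewrite tnth_lin; apply: rpred_sum => j _; apply: rpredZ.
  by rewrite dhomogX /= mdeg1.
exact: gen.
Qed.

End S.

Section S.
Variable R : realType.
Local Notation C := (R[i]).
Variable N : nat.
Local Notation P := {mpoly C[N]}.

Lemma coef_filter_sum (p : P) (Pr : pred 'X_{1..N}) (sg : 'X_{1..N} -> 'X_{1..N}) e0 :
  e0 \in msupp p -> Pr e0 ->
  (forall e, e \in msupp p -> Pr e -> sg e = sg e0 -> e = e0) ->
  (\sum_(e <- msupp p | Pr e) p@_e *: 'X_[sg e])@_(sg e0) = p@_e0.
Proof.
move=> e0in Pe0 inj; rewrite raddf_sum /= big_mkcond (bigD1_seq e0) ?msupp_uniq //=.
rewrite Pe0 mcoeffZ mcoeffX eqxx mulr1 big1_seq ?addr0 // => e /andP [ne ein].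
case: ifP => // Pe; rewrite mcoeffZ mcoeffX; case: eqP => [E|]; last by rewrite mulr0.
by move: ne; rewrite (inj e ein Pe E) eqxx.
Qed.

Lemma homog_eval0 d (p : P) : (0 < d)%N -> p \is d.-homog -> p.@[fun _ => 0] = 0.
Proof.
move=> d0 hp; rewrite mevalE big1_seq // => e /andP [_ ein].
have : (0 < mdeg e)%N by have := dhomog_mf hp ein; rewrite /= => ->.
case: (pickP (fun i => 0 < e i)%N) => [i ei _ | h].
  by rewrite (bigD1 i) //= expr0n eqn0Ngt ei mul0r mulr0.
rewrite mdegE big1 // => i _; move: (h i) => /= /negbT; rewrite lt0n negbK.
by move/eqP.
Qed.

Lemma NZ1 d (p : P) j : (0 < d)%N -> p \is d.-homog ->
  (forall x : 'I_N -> C, (exists i, x i != 0) -> x j = 0 -> p.@[x] = 0) ->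
  forall e, e \in msupp p -> e j != 0%N.
Proof.
move=> d0 hp H e0 e0in; apply/negP => /eqP e0j.
pose F := \sum_(e <- msupp p | e j == 0%N) p@_e *: 'X_[id e].
have FE : forall x, F.@[x] = p.@[fun i => if i == j then 0 else x i].
  move=> x; rewrite /F raddf_sum /= [RHS]mevalE big_mkcond /=; apply: eq_bigr => e _.
  case: ifP => ej.
    rewrite mevalZ mevalX; congr (_ * _); apply: eq_bigr => i _.
    by case: eqP => [->|//]; rewrite (eqP ej) !expr0.
  by rewrite (bigD1 j) //= eqxx expr0n ej mul0r mulr0.
have F0 : F = 0.
  apply: mpoly_vanish => x; rewrite FE.
  case: (pickP (fun i => (if i == j then 0 else x i) != 0)) => [i hi | h].
    by apply: H; [exists i | rewrite eqxx].
  rewrite (@meval_eq _ _ _ (fun _ => 0)) ?(homog_eval0 d0 hp) // => i.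
  by move: (h i) => /negbT /negPn /eqP.
have := @coef_filter_sum p (fun e => e j == 0%N) id e0 e0in.
rewrite /= e0j eqxx -/F F0 mcoeff0 => /(_ isT) h.
move: e0in; rewrite mcoeff_msupp -h ?eqxx // => e _ _ ->.
Qed.

Lemma NZ2 d (p : P) j k : k != j -> p \is d.-homog ->
  (forall x : 'I_N -> C, x j = 0 -> x k = 1 -> p.@[x] != 0) ->
  forall e, e \in msupp p -> e j = 0%N -> e k = d.
Proof.
move=> kj hp H e0 e0in e0j; case: (eqVneq (e0 k) d) => // e0k; exfalso.
pose tau (e : 'X_{1..N}) : 'X_{1..N} :=
  [multinom (if (i == j) || (i == k) then 0%N else e i) | i < N].
pose xk (x : 'I_N -> C) := fun i => if i == j then 0 else if i == k then 1 else x i.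
pose c := p.@[xk (fun _ => 0)].
have c0 : c != 0 by apply: H; rewrite /xk ?eqxx // (negPf kj).
pose S := \sum_(e <- msupp p | e j == 0%N) p@_e *: 'X_[tau e].
pose F := S - c%:MP.
have FE : forall x, F.@[x] = p.@[xk x] - c.
  move=> x; rewrite /F mevalB mevalC; congr (_ - _).
  rewrite /S raddf_sum /= [RHS]mevalE big_mkcond /=; apply: eq_bigr => e _.
  case: ifP => ej.
    rewrite mevalZ mevalX; congr (_ * _); apply: eq_bigr => i _.
    rewrite /tau mnmE /xk; case: (eqVneq i j) => [->|nij] /=.
      by rewrite (eqP ej) !expr0.
    case: (eqVneq i k) => [->|nik] /=; first by rewrite expr1n expr0.
    by [].
  by rewrite (bigD1 j) //= /xk eqxx expr0n ej mul0r mulr0.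
have tau0 : tau e0 != 0%MM.
  apply/negP => /eqP t0; move/eqP: e0k; apply.
  have := dhomog_mf hp e0in; rewrite /= mdegE => <-.
  rewrite (bigD1 k) //= big1 ?addn0 // => i nik.
  have := congr1 (fun m : 'X_{1..N} => m i) t0; rewrite /tau mnmE mnm0E /= (negPf nik) orbF.
  by case: (eqVneq i j) => [->|nij] //=.
have inj : forall e, e \in msupp p -> e j == 0%N -> tau e = tau e0 -> e = e0.
  move=> e ein /eqP ej te.
  have ti : forall i, i != k -> e i = e0 i.
    move=> i' nik; case: (eqVneq i' j) => [->|nij]; first by rewrite ej e0j.
    have := congr1 (fun m : 'X_{1..N} => m i') te.
    by rewrite /tau !mnmE /= (negPf nij) (negPf nik).
  apply/mnmP => i; case: (eqVneq i k) => [->|nik]; last exact: ti.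
  have h1 := dhomog_mf hp ein; have h2 := dhomog_mf hp e0in; simpl in h1, h2.
  rewrite mdegE (bigD1 k) //= in h1; rewrite mdegE (bigD1 k) //= in h2.
  have hs : (\sum_(i | i != k) e i = \sum_(i | i != k) e0 i)%N.
    by apply: eq_bigr => i' /ti.
  by apply/eqP; rewrite -(eqn_add2r (\sum_(i | i != k) e0 i)) -{1}hs h1 h2.
have Fz : forall z, F.@[z] = 0.
  move=> z; apply/eqP/negPn/negP => Fnz.
  pose h (i : 'I_N) : {poly C} :=
    if i == j then 0 else if i == k then 1 else (z i)%:P * 'X.
  pose u := \sum_(e <- msupp p) p@_e *: \prod_i h i ^+ e i.
  have uE : forall t, u.[t] = p.@[fun i => (h i).[t]].
    move=> t; rewrite /u horner_sum mevalE; apply: eq_bigr => e _.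
    rewrite hornerZ horner_prod; congr (_ * _); apply: eq_bigr => i _.
    by rewrite horner_exp.
  have hE : forall t i, (h i).[t] = xk (fun i => z i * t) i.
    move=> t i; rewrite /h /xk; case: (i == j); first by rewrite horner0.
    case: (i == k); first by rewrite hornerC.
    by rewrite hornerCM hornerX.
  have u0 : u.[0] = c.
    rewrite uE /c; apply: meval_eq => i; rewrite hE /xk.
    by case: (i == j); case: (i == k); rewrite ?mulr0.
  have u1 : u.[1] != c.
    have -> : u.[1] = p.@[xk z].
      rewrite uE; apply: meval_eq => i; rewrite hE /xk.
      by case: (i == j); case: (i == k); rewrite ?mulr1.
    by rewrite -subr_eq0 -FE.
  have su : size u != 1%N.
    apply/negP => /eqP s1; move: u1; rewrite -u0 (size1_polyC (eq_leq s1)) !hornerC.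
    by rewrite eqxx.
  have /closed_rootP [t /rootP ut] := su.
  have : p.@[fun i => (h i).[t]] != 0.
    by apply: H; rewrite hE /xk ?eqxx // (negPf kj).
  by rewrite -uE ut eqxx.
have F0 : F = 0 := mpoly_vanish Fz.
have := @coef_filter_sum p (fun e => e j == 0%N) tau e0 e0in.
rewrite /= e0j eqxx => /(_ isT inj) hc.
have : S = c%:MP by apply/eqP; rewrite -subr_eq0 -/F F0.
move/(congr1 (mcoeff (tau e0))); rewrite /S hc mcoeffC (negPf tau0) mulr0.
by move/eqP; rewrite mcoeff_eq0 e0in.
Qed.

End S.

Section S.
Variable R : realType.
Local Notation C := (R[i]).
Variable N : nat.
Local Notation P := {mpoly C[N]}.

Definition ev (j : 'I_N) (g : C) : 'rV[C]_N := \row_i (if i == j then g else 0).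

Lemma ev_diag j g (w : 'rV[C]_N) : ev j g *m diag_mx w = ev j (g * w 0 j).
Proof.
apply/rowP => i; rewrite mul_mx_diag !mxE.
by case: (eqVneq i j) => [->|]; rewrite ?mul0r.
Qed.

Lemma ev_T j g k u : k != j -> ev j g *m T k u = ev j g.
Proof.
move=> kj; apply/rowP => i; rewrite rowT !mxE (negPf kj) mul0r addr0 //.
Qed.

Lemma T_clear (a : 'rV[C]_N) j : a 0 j != 0 ->
  a *m T j (fun i => if i == j then 0 else - a 0 i / a 0 j) = ev j (a 0 j).
Proof.
move=> aj; apply/rowP => i; rewrite rowT !mxE.
case: (eqVneq i j) => [->|nij]; first by rewrite mulr0 addr0.
by rewrite mulrCA divff // mulr1 subrr.
Qed.

Lemma lf_scale (c : C) (a : 'rV[C]_N) : lf (c *: a) = c *: lf a.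
Proof.
rewrite /lf scaler_sumr; apply: eq_bigr => i _; by rewrite mxE scalerA.
Qed.

Lemma lf_nz (a : 'rV[C]_N) : lf a != 0 -> exists j, a 0 j != 0.
Proof.
move=> nz; case: (pickP (fun j => a 0 j != 0)) => [j hj|h]; first by exists j.
move/negP: nz; case; apply/eqP; rewrite /lf big1 // => i _.
by move: (h i) => /negbT /negPn /eqP ->; rewrite scale0r.
Qed.

Lemma fix_det (A : 'M[C]_N) j : A \in unitmx ->
  let D := diag_mx (\row_i (if i == j then (\det A)^-1 else 1)) in
  (A *m D) \in unitmx /\ \det (A *m D) = 1.
Proof.
move=> uA D; have dA : \det A != 0 by rewrite -unitfE -unitmxE.
have d1 : \det (A *m D) = 1.
  rewrite det_mulmx det_diag (bigD1 j) //= mxE eqxx big1 ?mulr1 ?divff //.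
  by move=> i ni; rewrite mxE (negPf ni).
by split => //; rewrite unitmxE d1 unitr1.
Qed.

Lemma CC1 (l : P) : is_form 1 l ->
  exists (M : 'M[C]_N) j (g : C),
    [/\ M \in unitmx, \det M = 1, g != 0 & l \mPo lin_subst M = g *: 'X_j].
Proof.
case=> l0 hl; set a := \row_i l@_U_(i).
have la : l = lf a := lin1 hl.
have [j aj] : exists j, a 0 j != 0 by apply: lf_nz; rewrite -la.
set T1 := T j (fun i => if i == j then 0 else - a 0 i / a 0 j).
have uT1 : T1 \in unitmx by apply: T_unit; rewrite eqxx.
have [uM dM] := fix_det j uT1.
set M := T1 *m _ in uM dM.
exists M, j, (a 0 j * (\det T1)^-1); split => //.
  rewrite mulf_neq0 // invr_eq0 -unitfE -unitmxE //.
by rewrite la lf_comp /M mulmxA T_clear // ev_diag !mxE eqxx -lf_delta.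
Qed.

Lemma CC2 (l l' : P) : is_form 1 l -> is_form 1 l' ->
  ~ (exists c : C, l' = c *: l) ->
  exists (M : 'M[C]_N) j k (g b : C),
    [/\ M \in unitmx, \det M = 1, g != 0 & b != 0] /\
    [/\ k != j, l \mPo lin_subst M = g *: 'X_j & l' \mPo lin_subst M = b *: 'X_k].
Proof.
case=> l0 hl [l'0 hl'] nmul; set a := \row_i l@_U_(i); set a' := \row_i l'@_U_(i).
have la : l = lf a := lin1 hl.
have la' : l' = lf a' := lin1 hl'.
have [j aj] : exists j, a 0 j != 0 by apply: lf_nz; rewrite -la.
set u1 := (fun i => if i == j then 0 else - a 0 i / a 0 j).
set T1 := T j u1.
have uT1 : T1 \in unitmx by apply: T_unit; rewrite /u1 eqxx.
set b := a' *m T1.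
have [k /andP [kj bk]] : exists k, (k != j) && (b 0 k != 0).
  case: (pickP (fun k => (k != j) && (b 0 k != 0))) => [k hk|h]; first by exists k.
  exfalso; apply: nmul; exists (a' 0 j / a 0 j); rewrite la la' -lf_scale.
  congr lf; apply/rowP => i; rewrite mxE.
  case: (eqVneq i j) => [->|nij]; first by rewrite [RHS]mxE divfK // mxE.
  have hb : a' 0 i + a' 0 j * (- a 0 i / a 0 j) = 0.
    move: (h i); rewrite nij /= => /negbT /negPn /eqP.
    by rewrite /b rowT /u1 (negPf nij).
  have -> : l'@_U_(i) = a' 0 i by rewrite mxE.
  rewrite [in RHS]mxE; move/eqP: hb; rewrite addr_eq0 => /eqP ->.
  by rewrite mulNr mulrN opprK mulrA mulrAC.
set u2 := (fun i => if i == k then 0 else - b 0 i / b 0 k).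
set T2 := T k u2.
have uT2 : T2 \in unitmx by apply: T_unit; rewrite /u2 eqxx.
have uT : T1 *m T2 \in unitmx by rewrite unitmx_mul uT1 uT2.
have [uM dM] := fix_det j uT.
set M := (T1 *m T2) *m _ in uM dM.
exists M, j, k, (a 0 j * (\det (T1 *m T2))^-1), (b 0 k); split; split => //.
  by rewrite mulf_neq0 // invr_eq0 -unitfE -unitmxE.
  have h1 : a *m T1 = ev j (a 0 j) := T_clear aj.
  have h2 : ev j (a 0 j) *m T2 = ev j (a 0 j) := ev_T _ _ kj.
  rewrite la lf_comp /M !mulmxA h1 h2 ev_diag -lf_delta; congr lf.
  by apply/rowP => i; rewrite !mxE; case: (i == j); rewrite ?eqxx.
have h1 : b *m T2 = ev k (b 0 k) := T_clear bk.
rewrite la' lf_comp /M !mulmxA -/b h1 ev_diag -lf_delta; congr lf.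
by apply/rowP => i; rewrite !mxE (negPf kj) mulr1; case: (i == k).
Qed.

Lemma Mx_nz (M : 'M[C]_N) (x : 'I_N -> C) : M \in unitmx -> (exists i, x i != 0) ->
  exists i, \sum_j M i j * x j != 0.
Proof.
move=> uM [i0 xi0].
case: (pickP (fun i => \sum_j M i j * x j != 0)) => [i hi|h]; first by exists i.
exfalso; move/negP: xi0; apply.
set X := \col_i x i.
have MX : M *m X = 0.
  apply/colP => i; rewrite !mxE; move: (h i) => /negbT /negPn /eqP hz.
  by apply: etrans hz; apply: eq_bigr => j _; rewrite /X mxE.
have := congr1 (fun Y => (invmx M *m Y) i0 0) MX.
by rewrite /= mulKmx // mulmx0 !mxE => ->.
Qed.

End S.

Lemma prod_exprz1 (F : fieldType) (I : finType) (s : F) (f : I -> int) :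
  s != 0 -> \prod_i s ^ f i = s ^ (\sum_i f i).
Proof.
move=> s0; apply: (big_rec2 (fun y1 y2 => y1 = s ^ y2)) => [|i y1 y2 _ ->].
  by rewrite expr0z.
by rewrite expfzDr.
Qed.

Lemma sum_delta (N : nat) (j : 'I_N) (f : 'I_N -> nat) :
  (\sum_i (i == j) * f i = f j)%N.
Proof.
rewrite (bigD1 j) //= eqxx mul1n big1 ?addn0 // => i ni.
by rewrite (negPf ni).
Qed.

Lemma sumZ (I : finType) (F : I -> nat) : ((\sum_i F i)%N)%:Z = \sum_i (F i)%:Z.
Proof. by rewrite -[LHS]intz sumMz; apply: eq_bigr => *; rewrite intz. Qed.

Section S.
Variable R : realType.
Local Notation C := (R[i]).
Variables n d : nat.
Local Notation N := n.+2.
Local Notation P := {mpoly C[N]}.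

Definition wts (j k : 'I_N) (i : 'I_N) : int :=
  ((N * d) * (i == j) + N * (i == k))%N%:Z - (d.+1)%:Z.

Lemma wt_wts j k e : k != j ->
  wt (wts j k) e = ((N * d * e j + N * e k)%N)%:Z - ((d.+1 * mdeg e)%N)%:Z.
Proof.
move=> kj; rewrite /wt /wts.
under eq_bigr do rewrite mulrBl.
rewrite sumrB; congr (_ - _).
  rewrite -sumZ; congr Posz.
  rewrite (eq_bigr (fun i => N * d * ((i == j) * e i) + N * ((i == k) * e i))%N).
    by rewrite big_split /= -!big_distrr /= !sum_delta.
  by move=> i _; rewrite mulnDl !mulnA.
rewrite mdegE big_distrr /= sumZ.
by apply: eq_bigr => i _; rewrite PoszM.
Qed.

Lemma sum_wts j k : k != j -> \sum_i wts j k i = 0.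
Proof.
move=> kj; rewrite /wts sumrB -!sumZ.
have e1 : forall c (l : 'I_N), (\sum_(i < N) c * (i == l) = c)%N.
  move=> c l; rewrite (eq_bigr (fun i => (i == l) * c)%N) ?sum_delta //.
  by move=> i _; rewrite mulnC.
rewrite (eq_bigr (fun i => N * d * (i == j) + N * (i == k))%N) //.
rewrite big_split /= !e1 sum_nat_const card_ord.
apply/eqP; rewrite subr_eq0; apply/eqP; congr Posz.
by rewrite mulnS addnC mulnC.
Qed.

Lemma act_split (M Dm : 'M[C]_N) (p : P) :
  act (invmx (M *m Dm)) p = (p \mPo lin_subst M) \mPo lin_subst Dm.
Proof. by rewrite /act invmxK lin_substM comp_mpolyA. Qed.

Lemma core (a b m : nat) (p l : P) (M : 'M[C]_N) j k (g : C)
    (Q : {mpoly C[#|{: mons N d}| + #|{: mons N 1}|]}) :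
  (2 <= d)%N -> (d <= n.+1)%N -> (0 < b)%N -> (0 < m)%N ->
  p \is d.-homog -> l \is 1.-homog ->
  \det M = 1 -> k != j ->
  l \mPo lin_subst M = g *: 'X_j ->
  (forall e, e \in msupp (p \mPo lin_subst M) -> e j = 0%N -> e k = d) ->
  bihomog (m * a) (m * b) Q -> sl_invariant Q ->
  eval_coords Q p l = 0.
Proof.
move=> d2 dn b0 m0 hp hl dM kj lM hsupp hQ hinv.
apply: (@HM R N d Q (m * a) (m * b) (p \mPo lin_subst M) (g *: 'X_j)
          (wts j k) 0 1 (eval_coords Q p l) hQ).
- move=> e ein; rewrite wt_wts //.
  have := dhomog_mf (comp_homog M hp) ein; rewrite /= => ->.
  rewrite subr_ge0 lez_nat.
  case: (posnP (e j)) => [ej|ej].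
    rewrite ej (hsupp e ein ej); nia.
  nia.
- have jk : j != k by rewrite eq_sym.
  move=> e /msupp_X ->; rewrite wt_wts // mdeg1 !mnm1E eqxx (negPf jk).
  rewrite lerBrDr -PoszD lez_nat.
  nia.
- rewrite mulr0 add0r mulr1 ltz_nat; nia.
- move=> s s0; rewrite -lM -!act_split; apply: hinv => //.
  rewrite det_inv det_mulmx dM mul1r det_diag.
  rewrite (eq_bigr (fun i => s ^ wts j k i)) ?prod_exprz1 ?sum_wts ?expr0z ?invr1 //.
  by move=> i _; rewrite mxE.
Qed.

End S.

Unset Implicit Arguments.
Set Strict Implicit.
Theorem lemma3p6 (R : realType) (n d a b : nat) :
  (2 <= d)%N -> (d <= n.+1)%N ->
  (* t = b / a with a, b > 0 and 0 < t < t_{n,d} = d / (n+1) *)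
  (0 < a)%N -> (0 < b)%N -> (b * n.+1 < d * a)%N ->
  (forall p l : {mpoly R[i][n.+2]}, is_form d p -> is_form 1 l ->
     Z1 p l \/ Z2 p l -> git_unstable d a b p l) /\
  (forall p l : {mpoly R[i][n.+2]}, is_form d p -> is_form 1 l ->
     ((~ (Z1 p l \/ Z2 p l)) /\ git_semistable d a b p l) <->
     git_semistable d a b p l).
Proof.
move=> d2 dn a0 b0 hab.
have d0 : (0 < d)%N by apply: leq_trans d2.
have part1 : forall p l : {mpoly R[i][n.+2]}, is_form d p -> is_form 1 l ->
     Z1 p l \/ Z2 p l -> git_unstable d a b p l.
  move=> p l [pnz hp] [lnz hl] HZ [m [Q [m0 [hQ [hinv hev]]]]].
  move/eqP: hev; apply.
  case: HZ => [Z1h | [l' [hl' [nmul Z2h]]]].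
  - have [M [j [g [uM dM g0 lM]]]] := CC1 (conj lnz hl).
    pose k := lift j ord0.
    have kj : k != j by rewrite eq_sym neq_lift.
    apply: (core d2 dn b0 m0 hp hl dM kj lM _ hQ hinv).
    move=> e ein ej; exfalso; move: ej; apply/eqP.
    apply: (NZ1 d0 (comp_homog M hp) _ ein) => x xnz xj.
    rewrite comp_lin; apply: Z1h; first exact: Mx_nz.
    by rewrite -comp_lin lM mevalZ mevalXU xj mulr0.
  - have [M [j [k [g [bb [[uM dM g0 bb0] [kj lM l'M]]]]]]] := CC2 (conj lnz hl) hl' nmul.
    apply: (core d2 dn b0 m0 hp hl dM kj lM _ hQ hinv).
    apply: (NZ2 kj (comp_homog M hp)) => x xj xk.
    apply/negP => /eqP px; rewrite comp_lin in px.
    have ynz : exists i, \sum_j0 M i j0 * x j0 != 0.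
      by apply: Mx_nz => //; exists k; rewrite xk oner_eq0.
    have ly : l.@[fun i => \sum_j0 M i j0 * x j0] = 0.
      by rewrite -comp_lin lM mevalZ mevalXU xj mulr0.
    have [_ /eqP] := (Z2h _ ynz).1 (conj px ly).
    by rewrite -comp_lin l'M mevalZ mevalXU xk mulr1 (negPf bb0).
split => // p l hp hl; split; first by case.
move=> ss; split => // HZ; exact: (part1 p l hp hl HZ ss).
Qed.
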